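(* Let $p$ be an odd prime, $m$ a positive integer, $q=p^m$. Let $l,e,r,s$ be positive integers such that $l\ge3$ is odd, $s$ is even, $\gcd(l,e)=1$, $l\mid r+es$, and $q-1=ls$. Let $\gamma$ be a primitive element of $\mathbb{F}_q$, $\xi=\gamma^s$, and $A_i=\xi^{ei}+1$ for $0\le i\le l-1$. Then $P(x)=x^r(x^{es}+1)$ is a permutation polynomial of $\mathbb{F}_q$ if and only if all of the following hold: $\gcd(r,s)=1$; $p\mid 2^s-1$; $l\nmid r$; the elements $A_1^s,A_2^s,\dots,A_{l-1}^s$ are pairwise distinct $l$-th roots of unity; and $\mathrm{Ind}_\gamma(A_k)+kr\not\equiv\mathrm{Ind}_\gamma(2)\pmod l$ for all $k=1,\dots,l-1$.
   Context: A permutation polynomial of $\mathbb{F}_q$ is one inducing a bijection of $\mathbb{F}_q$. For nonzero $a\in\mathbb{F}_q$, $\mathrm{Ind}_\gamma(a)$ is the residue class $b\bmod(q-1)$ with $a=\gamma^b$; it has a well-defined residue modulo $l$ since $l\mid q-1$. *)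

(* Defs.v *)
From HB Require Import structures.
From mathcomp Require Import all_boot all_order all_algebra all_field.
Set Implicit Arguments. Unset Strict Implicit. Unset Printing Implicit Defensive.
Import GRing.Theory.
Local Open Scope ring_scope.

Definition permutation_poly (F : finFieldType) (P : {poly F}) : Prop :=
  bijective (fun x : F => P.[x]).

(* Ind_gamma(a): the least b in [0, q-1) with gamma^b = a (a representative
   of the residue class mod q-1; for a primitive gamma and a != 0 it exists). *)
Definition Ind (F : finFieldType) (gamma a : F) : nat :=
  find (fun b => gamma ^+ b == a) (iota 0 #|F|.-1).

(* Main.v *)
Require Import Defs.
From HB Require Import structures.
From mathcomp Require Import all_boot all_order all_algebra all_field.
From mathcomp Require Import zify ring.
Import GRing.Theory.
Local Open Scope ring_scope.

Lemma uniq_map_inj_in (T1 T2 : eqType) (f : T1 -> T2) (s : seq T1) :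
  uniq (map f s) -> {in s &, injective f}.
Proof.
elim: s => [|x s IH] //= /andP [nx U] i j; rewrite !inE.
move=> /orP[/eqP->|iS] /orP[/eqP->|js] E //.
- by rewrite E (map_f f js) in nx.
- by rewrite -E (map_f f iS) in nx.
- exact: IH.
Qed.

Lemma perm_map_iota (f : nat -> nat) a k :
  {in iota a k &, injective f} -> {in iota a k, forall i, f i \in iota a k} ->
  perm_eq (map f (iota a k)) (iota a k).
Proof.
move=> finj fin.
have U : uniq (map f (iota a k)) by rewrite map_inj_in_uniq ?iota_uniq.
apply: uniq_perm => //; first exact: iota_uniq.
have sub : {subset map f (iota a k) <= iota a k}.
  by move=> y /mapP [x xin ->]; apply: fin.
by have := uniq_min_size U sub; rewrite size_map => /(_ (leqnn _)) [].
Qed.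

Lemma Qperm (F : fieldType) (xi : F) (l c : nat) :
  l.-primitive_root xi -> coprime c l ->
  \prod_(1 <= j < l) (1 - xi ^+ (c * j)) = \prod_(1 <= j < l) (1 - xi ^+ j).
Proof.
move=> xp cop.
have xcp : l.-primitive_root (xi ^+ c) by rewrite prim_root_exp_coprime.
have l0 := prim_order_gt0 xp.
pose f j := (c * j %% l)%N.
have P : perm_eq (map f (index_iota 1 l)) (index_iota 1 l).
  apply: perm_map_iota.
  - move=> i j; rewrite !mem_iota => /andP[_ il] /andP[_ jl] /eqP E.
    have : (xi ^+ c) ^+ i == (xi ^+ c) ^+ j.
      by rewrite -!exprM (eq_prim_root_expr xp).
    by rewrite (eq_prim_root_expr xcp) !modn_small //; [move/eqP | lia | lia].
  - move=> i; rewrite !mem_iota /f => /andP[i1 il].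
    rewrite subnKC; last lia.
    rewrite ltn_pmod // andbT.
    rewrite lt0n; apply/negP => /eqP E.
    have : (xi ^+ c) ^+ i == (xi ^+ c) ^+ 0.
      by rewrite -!exprM (eq_prim_root_expr xp) muln0 mod0n E.
    by rewrite (eq_prim_root_expr xcp) mod0n modn_small //; [lia|lia].
rewrite perm_sym in P.
rewrite [RHS](perm_big _ P) /= big_map.
by apply: eq_bigr => j _; rewrite /f prim_expr_mod.
Qed.

Lemma prodA1 (F : fieldType) (xi : F) (l e : nat) :
  l.-primitive_root xi -> coprime e l -> odd l ->
  \prod_(1 <= j < l) (xi ^+ (e * j) + 1) = 1.
Proof.
move=> xp cop lodd.
have l0 := prim_order_gt0 xp.
have Q1 : \prod_(1 <= j < l) (1 - xi ^+ j) != 0.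
  rewrite big_seq; apply: (big_ind (fun x => x != 0)); first exact: oner_neq0.
    by move=> x y; apply: mulf_neq0.
  move=> j; rewrite mem_iota => /andP[j1 jl]; rewrite subr_eq0.
  apply/negP => /eqP E.
  have : xi ^+ 0 == xi ^+ j by rewrite expr0 E.
  by rewrite (eq_prim_root_expr xp) mod0n modn_small //; lia.
have H : \prod_(1 <= j < l) (xi ^+ (e * j) + 1) * \prod_(1 <= j < l) (1 - xi ^+ (e * j))
   = \prod_(1 <= j < l) (1 - xi ^+ ((2 * e) * j)).
  rewrite -big_split /=; apply: eq_bigr => j _.
  rewrite -mulnA [(2 * _)%N]mulnC [in RHS]exprM.
  set x := xi ^+ (e * j); ring.
rewrite !Qperm // in H; last by rewrite coprimeMl cop andbT coprime2n.
by apply: (mulIf Q1); rewrite H mul1r.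
Qed.

Theorem theorem4p3 (F : finFieldType) (p m l e r s : nat) (gamma : F) :
  prime p -> odd p -> (0 < m)%N -> #|F| = (p ^ m)%N ->
  (0 < l)%N -> (0 < e)%N -> (0 < r)%N -> (0 < s)%N ->
  (3 <= l)%N -> odd l -> ~~ odd s -> coprime l e ->
  (l %| r + e * s)%N -> (p ^ m - 1 = l * s)%N ->
  (p ^ m - 1)%N.-primitive_root gamma ->
  let xi := gamma ^+ s in
  let A := fun i : nat => xi ^+ (e * i) + 1 in
  permutation_poly ('X^r * ('X^(e * s) + 1) : {poly F}) <->
  [/\ coprime r s,
      (p %| 2 ^ s - 1)%N,
      ~~ (l %| r)%N,
      (forall i : nat, (0 < i < l)%N -> l.-unity_root (A i ^+ s))
        /\ uniq [seq A i ^+ s | i <- iota 1 l.-1]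
    & forall k : nat, (0 < k < l)%N ->
        (Ind gamma (A k) + k * r != Ind gamma (2%:R : F) %[mod l])%N].
Proof.
move=> pp podd m0 cardF l0 e0 r0 s0 l3 lodd seven cle dvdl nE gprim xi A.
move: nE gprim; set n := (p ^ m - 1)%N => nE gprim.
have pm0 : (0 < p ^ m)%N by rewrite expn_gt0 prime_gt0.
have cardF' : #|F| = n.+1 by rewrite cardF /n; lia.
have n0 : (0 < n)%N by rewrite nE muln_gt0 l0 s0.
have xip : l.-primitive_root xi.
  rewrite /xi; have -> : s = (n %/ l)%N by rewrite nE mulKn.
  by apply: dvdn_prim_root => //; rewrite nE dvdn_mulr.
have pch : p \in [pchar F] := card_finPcharP cardF pp.
have two0 : (2%:R : F) != 0.
  rewrite -(dvdn_pcharf pch); apply/negP => /(dvdn_leq (isT : (0 < 2)%N)) p2.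
  have := prime_gt1 pp; have : p != 2%N by apply/eqP => E; rewrite E in podd.
  lia.
have unitn : forall x : F, x != 0 -> x ^+ n = 1.
  move=> x x0; apply: (mulIf x0); rewrite mul1r -exprSr -cardF'.
  exact: expf_card.
have gall : forall x : F, x != 0 -> exists b, x = gamma ^+ b.
  by move=> x x0; have [i ->] := prim_rootP gprim (unitn x x0); exists i.
have IndP : forall a : F, a != 0 -> gamma ^+ Ind gamma a = a.
  move=> a a0; have [b Eb] := prim_rootP gprim (unitn a a0).
  have H : has (fun b => gamma ^+ b == a) (iota 0 #|F|.-1).
    apply/hasP; exists (val b); last by rewrite Eb.
    by rewrite mem_iota cardF' /= add0n ltn_ord.
  have := nth_find 0%N H; rewrite /Ind nth_iota ?add0n; first by move/eqP.
  by move: H; rewrite has_find size_iota.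
have xiE : forall a b, xi ^+ a = xi ^+ b <-> (a = b %[mod l])%N.
  move=> a b; have H := eq_prim_root_expr xip a b.
  split => [E|E]; first by apply/eqP; rewrite -H E.
  by apply/eqP; rewrite H; apply/eqP.
have xi1 : forall k, (l %| k)%N -> xi ^+ k = 1.
  move=> k lk; rewrite -(expr0 xi); apply/xiE; rewrite mod0n; exact/eqP.
have Anz : forall i, A i != 0.
  move=> i; apply/negP => /eqP E.
  have E' : xi ^+ (e * i) = - 1 by apply/eqP; rewrite -addr_eq0; apply/eqP; exact: E.
  have : (xi ^+ (e * i)) ^+ l = 1 by rewrite exprAC (prim_expr_order xip) expr1n.
  rewrite E' -signr_odd lodd /= expr1 => H.
  by move: two0; rewrite mulr2n -[X in 1 + X]H subrr eqxx.
pose Pf (x : F) := x ^+ r * (x ^+ (e * s) + 1).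
have Ph : forall x, ('X^r * ('X^(e * s) + 1) : {poly F}).[x] = Pf x.
  by move=> x; rewrite !hornerE.
have gs : forall b, (gamma ^+ b) ^+ s = xi ^+ b by move=> b; rewrite exprAC.
have Pg : forall b, Pf (gamma ^+ b) = gamma ^+ (b * r) * A b.
  by move=> b; rewrite /Pf /A -exprM [(e * s)%N]mulnC [(gamma ^+ b) ^+ (s * e)]exprM gs -exprM [(b * e)%N]mulnC.
pose T j := xi ^+ (j * r) * A j ^+ s.
have PT : forall b, Pf (gamma ^+ b) ^+ s = T b.
  by move=> b; rewrite Pg exprMn -exprM mulnC exprM.
have gam0 : gamma != 0.
  apply/negP => /eqP g0; have := prim_expr_order gprim.
  by rewrite g0 expr0n gtn_eqF // => /eqP; rewrite eq_sym oner_eq0.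
have Pfnz : forall x, x != 0 -> Pf x != 0.
  move=> x x0; have [b ->] := gall x x0.
  by rewrite Pg mulf_neq0 // expf_neq0.
have P0 : Pf 0 = 0 by rewrite /Pf expr0n gtn_eqF // mul0r.
have Tmod : forall j, T (j %% l)%N = T j.
  move=> j; rewrite /T /A.
  have -> : xi ^+ (j %% l * r) = xi ^+ (j * r) by apply/xiE; rewrite modnMml.
  have -> : xi ^+ (e * (j %% l)) = xi ^+ (e * j) by apply/xiE; rewrite modnMmr.
  by [].
have T3 : forall i, (i <= l)%N -> T (l - i)%N = A i ^+ s.
  move=> i il.
  have H1 : xi ^+ (e * (l - i)) + 1 = xi ^+ (e * (l - i)) * A i.
    rewrite /A mulrDr mulr1 -exprD -mulnDr (subnK il) (xi1 (e * l)%N) 1?addrC //.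
    exact: dvdn_mull.
  rewrite /T {1}/A H1 exprMn mulrA -[xi ^+ (e * (l - i)) ^+ s]exprM -exprD.
  have -> : ((l - i) * r + e * (l - i) * s = (l - i) * (r + e * s))%N by rewrite mulnDr mulnCA mulnA.
  by rewrite xi1 ?mul1r // dvdn_mull.
have T0 : T 0%N = 2%:R ^+ s by rewrite /T /A !muln0 !expr0 mul1r.
have TInd : forall j, T j = xi ^+ (j * r + Ind gamma (A j)).
  move=> j; have E := IndP _ (Anz j).
  by rewrite /T exprD -[xi ^+ Ind gamma (A j)]gs E.
have T2 : (2%:R : F) ^+ s = xi ^+ Ind gamma (2%:R : F) by rewrite -gs IndP.
have Bez : coprime r s -> exists u, forall z : F, z ^+ s = 1 -> (z ^+ r) ^+ u = z.
  move=> cop; case: (egcdnP s r0) => km kn E _; exists km => z zs.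
  rewrite -exprM mulnC E (eqP cop) exprD mulnC exprM zs expr1n mul1r expr1 //.
split.
- move=> Pbij.
  have Pinj : injective Pf.
    by move=> x y E; apply: (bij_inj Pbij); rewrite /= !Ph.
  have cop : coprime r s.
    rewrite /coprime; apply/negP => /negP nd.
    set d := gcdn r s in nd.
    have d0 : (0 < d)%N by rewrite gcdn_gt0 r0.
    have ds : (d %| s)%N := dvdn_gcdr r s.
    have [n' En] : exists n', n = (n' * d)%N.
      by apply/dvdnP; rewrite nE dvdn_mull.
    pose z := gamma ^+ (n %/ d).
    have Z1 : forall k, (d %| k)%N -> z ^+ k = 1.
      move=> k /dvdnP [k' ->]; rewrite /z -exprM En mulnK //.
      have -> : (n' * (k' * d) = (n' * d) * k')%N by rewrite mulnCA mulnC.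
      by rewrite -En exprM (prim_expr_order gprim) expr1n.
    have z1 : z != 1.
      rewrite -(expr0 gamma) /z (eq_prim_root_expr gprim) mod0n modn_small.
        by rewrite En mulnK // -lt0n; move: n0; rewrite En muln_gt0 => /andP[].
      have n1 : (0 < n')%N by move: n0; rewrite En muln_gt0 => /andP[].
      rewrite En mulnK // -[X in (X < _)%N]muln1 ltn_mul2l n1 /=; lia.
    apply: (negP z1); apply/eqP; apply: Pinj.
    by rewrite /Pf Z1 ?dvdn_gcdl // Z1 ?dvdn_mull // !expr1n.
  have [u Hu] := Bez cop.
  have Tinj : forall a b, T a = T b -> (a = b %[mod l])%N.
    move=> a b E.
    have x0 : gamma ^+ a != 0 by rewrite expf_neq0.
    have y0 : gamma ^+ b != 0 by rewrite expf_neq0.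
    have Py0 := Pfnz _ y0.
    pose w := Pf (gamma ^+ a) / Pf (gamma ^+ b).
    have ws : w ^+ s = 1.
      by rewrite /w expr_div_n !PT E divff // -PT expf_neq0.
    pose z := w ^+ u.
    have zr : z ^+ r = w by rewrite /z exprAC Hu.
    have zs : z ^+ s = 1 by rewrite /z exprAC ws expr1n.
    have Ez : Pf (z * gamma ^+ b) = Pf (gamma ^+ a).
      have zes : z ^+ (e * s) = 1 by rewrite mulnC exprM zs expr1n.
      rewrite /Pf exprMn [(z * _) ^+ (e * s)]exprMn zes mul1r.
      by rewrite zr -mulrA -/(Pf (gamma ^+ b)) /w divfK.
    have := Pinj _ _ Ez => Ez'.
    apply/xiE; rewrite -!gs -Ez' exprMn zs mul1r //.
  have two1 : (2%:R : F) ^+ s = 1.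
    pose sg j := ((j * r + Ind gamma (A j)) %% l)%N.
    have Tsg : forall j, T j = xi ^+ sg j.
      by move=> j; rewrite /sg (prim_expr_mod xip) TInd.
    have Psg : perm_eq (map sg (index_iota 0 l)) (index_iota 0 l).
      rewrite /index_iota subn0; apply: perm_map_iota.
        move=> i j; rewrite !mem_iota !add0n => /andP[_ il] /andP[_ jl] E.
        have : T i = T j by rewrite !Tsg E.
        by move/Tinj; rewrite !modn_small.
      by move=> i _; rewrite mem_iota add0n /= ltn_pmod.
    have Xprod : \prod_(0 <= j < l) xi ^+ j = 1.
      rewrite prodrXr bin2_sum bin2odd // xi1 // dvdn_mulr //.
    have HT : \prod_(0 <= j < l) T j = 1.
      have := Xprod; rewrite -(perm_big _ Psg) big_map => H.
      by rewrite (eq_bigr _ (fun j _ => Tsg j)).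
    move: HT; rewrite /T big_split /=.
    have -> : \prod_(0 <= j < l) xi ^+ (j * r) = 1.
      under eq_bigr do rewrite exprM.
      by rewrite prodrXl Xprod expr1n.
    rewrite mul1r prodrXl big_ltn // {1}/A muln0 expr0.
    rewrite prodA1 // ?mulr1 //; by rewrite coprime_sym.
  split => //.
  - rewrite (dvdn_pcharf pch) natrB ?expn_gt0 // natrX two1 subrr //.
  - apply/negP => lr.
    have : T 1%N = T (l - 1)%N.
      by rewrite T3 ?(ltnW l0) // /T mul1n xi1 // mul1r.
    move/Tinj; rewrite !modn_small; lia.
  - split.
      move=> i _; rewrite unity_rootE -exprM mulnC -nE unitn //.
    rewrite map_inj_in_uniq ?iota_uniq // => i j; rewrite !mem_iota.
    move=> /andP[i1 il] /andP[j1 jl] E.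
    have := Tinj (l - i)%N (l - j)%N; rewrite !T3; try lia.
    by move=> /(_ E); rewrite !modn_small; lia.
  - move=> k /andP[k0 kl]; apply/negP => /eqP H.
    have : T k = T 0%N.
      by rewrite T0 TInd T2; apply/xiE; rewrite addnC H.
    by move/Tinj; rewrite mod0n modn_small //; lia.
- case=> cop _ _ [_ U] Hind.
  have [u Hu] := Bez cop.
  have half : forall b, (0 < b < l)%N -> T 0%N = T b -> False.
    move=> b /andP[b0 bl]; rewrite T0 T2 TInd => /xiE H.
    apply: (negP (Hind b _)); first by rewrite b0 bl.
    by rewrite addnC; apply/eqP; rewrite H.
  have Tl : forall a b, (a < l)%N -> (b < l)%N -> T a = T b -> a = b.
    move=> a b al bl E.
    have [a0|a0] := eqVneq a 0%N; have [b0|b0] := eqVneq b 0%N.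
    - by rewrite a0 b0.
    - by exfalso; apply: (half b); [rewrite lt0n b0 bl | rewrite -a0].
    - by exfalso; apply: (half a); [rewrite lt0n a0 al | rewrite -b0].
    have Ea := T3 (l - a)%N (leq_subr _ _); rewrite subKn ?(ltnW al) // in Ea.
    have Eb := T3 (l - b)%N (leq_subr _ _); rewrite subKn ?(ltnW bl) // in Eb.
    rewrite Ea Eb in E.
    have ia : (l - a)%N \in iota 1 l.-1 by rewrite mem_iota; move: a0 al; clear; lia.
    have ib : (l - b)%N \in iota 1 l.-1 by rewrite mem_iota; move: b0 bl; clear; lia.
    have H := @uniq_map_inj_in _ _ _ _ U.
    have := H _ _ ia ib E; move: al bl; clear; lia.
  apply: injF_bij => x y /=; rewrite !Ph.
  have [->|x0] := eqVneq x 0; have [->|y0] := eqVneq y 0 => // E.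
  - by move: (Pfnz y y0); rewrite -E P0 eqxx.
  - by move: (Pfnz x x0); rewrite E P0 eqxx.
  have [a Ea] := gall x x0; have [b Eb] := gall y y0.
  have : T a = T b by rewrite -!PT -Ea -Eb E.
  rewrite -Tmod -[T b]Tmod => /Tl H.
  have ab : (a = b %[mod l])%N by apply: H; rewrite ltn_pmod.
  have xs : x ^+ s = y ^+ s by rewrite Ea Eb !gs; apply/xiE.
  have xes : x ^+ (e * s) = y ^+ (e * s) by rewrite mulnC !exprM xs.
  have ye : y ^+ (e * s) + 1 != 0.
    by apply/negP => H0; move: (Pfnz y y0); rewrite /Pf (eqP H0) mulr0 eqxx.
  have xr : x ^+ r = y ^+ r by apply: (mulIf ye); rewrite -[in LHS]xes; exact: E.
  have yn0 : y ^+ r != 0 by rewrite expf_neq0.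
  have ys0 : y ^+ s != 0 by rewrite expf_neq0.
  pose z := x / y.
  have zr : z ^+ r = 1 by rewrite /z expr_div_n xr divff.
  have zs : z ^+ s = 1 by rewrite /z expr_div_n xs divff.
  have := Hu z zs; rewrite zr expr1n => z1.
  by rewrite -[x](divfK y0) -/z -z1 mul1r.
Qed.
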